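(* In the setting below, let $(x_f,y_f,\theta_f)$ be a goal pose that is reached by at least one $2\pi$-arc $LSL$ or $RSR$ path. Then the minimum travel time over all $4\pi$-arc $LSL$ and $RSR$ paths reaching this goal pose is less than or equal to the minimum travel time over all $2\pi$-arc $LSL$ and $RSR$ paths reaching it.
   Context: Setting: a vehicle moves in the plane at unit speed with minimum turning radius $r>0$, in a steady current $(w_x,w_y)$ with speed $v_w=\sqrt{w_x^2+w_y^2}\in(0,1)$. The start pose is $(0,0,0)$ and the goal pose is $(x_f,y_f,\theta_f)$ with $\theta_f\in[0,2\pi)$. An $LSL$ path has parameters $(\alpha,\beta,\gamma)$ with $\alpha,\gamma\ge0$ and $\beta\ge0$: a left arc of angle $\alpha$ of radius $r$, a straight segment of length $\beta$, and a left arc of angle $\gamma$, in the frame moving with the current. Its travel time is $T=r(\alpha+\gamma)+\beta$. It reaches the goal iff for some $k\in\mathbb{Z}$: $\alpha+\gamma=2k\pi+\theta_f$, $x_f-w_xT=r\sin\theta_f+\beta\cos\alpha$, and $y_f-w_yT=r(1-\cos\theta_f)+\beta\sin\alpha$. An $RSR$ path is the analogous path with right arcs, with $T=r(\alpha+\gamma)+\beta$. It reaches the goal iff for some $k\in\mathbb{Z}$: $-\alpha-\gamma=2k\pi+\theta_f$, $x_f-w_xT=-r\sin\theta_f+\beta\cos\alpha$, and $y_f-w_yT=-r(1-\cos\theta_f)-\beta\sin\alpha$. A path is a $2\pi$-arc path if $\alpha,\gamma\in[0,2\pi)$, and a $4\pi$-arc path if $\alpha,\gamma\in[0,4\pi)$.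 *)

(* Defs.v *)
From Stdlib Require Import Reals Lra ZArith.
Open Scope R_scope.

Inductive path_kind := LSL | RSR.

Definition travel_time (r alpha beta gamma : R) : R := r * (alpha + gamma) + beta.

(* The path of kind [kd] with parameters (alpha,beta,gamma), in the current
   (wx,wy) with turning radius r, reaches the goal pose (xf,yf,thf)
   (from start pose (0,0,0)). *)
Definition reaches (kd : path_kind) (r wx wy xf yf thf alpha beta gamma : R) : Prop :=
  let T := travel_time r alpha beta gamma in
  match kd with
  | LSL => exists k : Z,
      alpha + gamma = 2 * IZR k * PI + thf /\
      xf - wx * T = r * sin thf + beta * cos alpha /\
      yf - wy * T = r * (1 - cos thf) + beta * sin alpha
  | RSR => exists k : Z,
      - alpha - gamma = 2 * IZR k * PI + thf /\
      xf - wx * T = - r * sin thf + beta * cos alpha /\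
      yf - wy * T = - r * (1 - cos thf) - beta * sin alpha
  end.

(* An admissible path whose arc angles lie in [0, bound):
   bound = 2*PI gives 2pi-arc paths, bound = 4*PI gives 4pi-arc paths. *)
Definition arc_path_reaching (bound : R) (kd : path_kind)
    (r wx wy xf yf thf alpha beta gamma : R) : Prop :=
  0 <= alpha < bound /\ 0 <= gamma < bound /\ 0 <= beta /\
  reaches kd r wx wy xf yf thf alpha beta gamma.

Definition arc_times (bound r wx wy xf yf thf : R) (T : R) : Prop :=
  exists (kd : path_kind) (alpha beta gamma : R),
    arc_path_reaching bound kd r wx wy xf yf thf alpha beta gamma /\
    T = travel_time r alpha beta gamma.

Definition is_minimum (S : R -> Prop) (m : R) : Prop :=
  S m /\ forall t, S t -> m <= t.

(* Main.v *)
Require Import Defs.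
From Stdlib Require Import Reals Lra Psatz List Classical ZArith Lia.
Open Scope R_scope.
Lemma beta_lt (P Q wx wy b1 b2 : R) : wx^2+wy^2 < 1 -> 0<=b1 -> b1 < b2 ->
  (P - wx*b1)^2+(Q-wy*b1)^2 = b1^2 -> (P - wx*b2)^2+(Q-wy*b2)^2 = b2^2 -> False.
Proof.
  intros Hw H1 H12 E1 E2.
  set (s := sqrt (wx^2+wy^2)).
  assert (Hs0 : 0 <= s) by apply sqrt_pos.
  assert (Hss : s*s = wx^2+wy^2) by (apply sqrt_sqrt; nra).
  assert (Hs1 : s < 1) by nra.
  set (u1 := P - wx*b1). set (u2 := Q - wy*b1). set (d := b2 - b1).
  set (dot := u1*wx + u2*wy).
  assert (CS : dot^2 <= b1^2 * s^2).
  { unfold dot. replace (b1^2) with (u1^2+u2^2) by (unfold u1,u2; lra).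
    replace (s^2) with (wx^2+wy^2) by (rewrite <- Hss; ring).
    assert (0 <= (u1*wy - u2*wx)^2) by apply pow2_ge_0. nra. }
  assert (Hbs : 0 <= b1*s) by nra.
  assert (Hd : - dot <= b1 * s).
  { destruct (Rle_dec (- dot) (b1*s)) as [h|h]; [exact h|]. exfalso. apply Rnot_le_lt in h.
    assert ((b1*s)*(b1*s) < (-dot)*(-dot)) by (apply Rmult_le_0_lt_compat; lra). nra. }
  assert (E3 : b2^2 = b1^2 - 2*d*dot + d^2*s^2).
  { rewrite <- E2. replace (s^2) with (wx^2+wy^2) by (rewrite <- Hss; ring). rewrite <- E1. unfold dot,u1,u2,d. ring. }
  assert (0 < d) by (unfold d; lra).
  assert (b2^2 <= (b1 + d*s)^2) by nra.
  assert (b1 + d*s < b2) by (unfold d in *; nra).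
  assert ((b1+d*s)*(b1+d*s) < b2*b2) by (apply Rmult_le_0_lt_compat; nra). nra.
Qed.
Lemma fin_min (A : Type) (Q : A -> R -> Prop)
  (HQ : forall c t1 t2, Q c t1 -> Q c t2 -> t1 = t2) (l : list A) :
  forall P : R -> Prop, (forall t, P t -> exists c, In c l /\ Q c t) ->
  (exists t, P t) -> exists m, is_minimum P m.
Proof.
  induction l as [|c l IH]; intros P HP [t0 Ht0].
  - destruct (HP t0 Ht0) as [c [[] _]].
  - destruct (classic (exists t, P t /\ ~ Q c t)) as [Hex|Hno].
    + destruct (IH (fun t => P t /\ ~ Q c t)) as [m [[Pm Qm] Hm]].
      { intros t [Pt nQ]. destruct (HP t Pt) as [c' [[->|Hi] Hq]]; [contradiction|eauto]. }
      { exact Hex. }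
      destruct (classic (exists t, P t /\ Q c t)) as [[t1 [Pt1 Qt1]]|Hno2].
      * exists (Rmin m t1). split.
        { unfold Rmin; destruct (Rle_dec m t1); auto. }
        intros t Pt. destruct (classic (Q c t)) as [q|nq].
        -- rewrite (HQ _ _ _ q Qt1). apply Rmin_r.
        -- eapply Rle_trans; [apply Rmin_l|]. apply Hm; auto.
      * exists m. split; auto. intros t Pt. apply Hm. split; auto.
        intro q. apply Hno2; eauto.
    + exists t0. split; auto. intros t Pt.
      assert (Q c t0). { apply NNPP; intro n; apply Hno; eauto. }
      assert (Q c t). { apply NNPP; intro n; apply Hno; eauto. }
      rewrite (HQ _ _ _ H H0). lra.
Qed.

Lemma beta_unique (P Q wx wy b1 b2 : R) : wx^2+wy^2 < 1 -> 0<=b1 -> 0<=b2 ->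
  (P - wx*b1)^2+(Q-wy*b1)^2 = b1^2 -> (P - wx*b2)^2+(Q-wy*b2)^2 = b2^2 -> b1 = b2.
Proof.
  intros. destruct (Rtotal_order b1 b2) as [h|[h|h]]; auto; exfalso.
  - eapply (beta_lt P Q wx wy b1 b2); eauto.
  - eapply (beta_lt P Q wx wy b2 b1); eauto.
Qed.

Lemma sq_helper (X Y c s b : R) : X = b*c -> Y = b*s -> s^2+c^2=1 -> X^2+Y^2 = b^2.
Proof. intros -> -> H. replace (b^2) with (b^2*(s^2+c^2)) by (rewrite H; ring). ring. Qed.

Lemma sc x : sin x ^2 + cos x ^2 = 1.
Proof. rewrite <- (sin2_cos2 x); unfold Rsqr; ring. Qed.

Definition reachk (kd : path_kind) (r wx wy xf yf thf : R) (k : Z) (alpha beta gamma : R) : Prop :=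
  let T := travel_time r alpha beta gamma in
  match kd with
  | LSL =>
      alpha + gamma = 2 * IZR k * PI + thf /\
      xf - wx * T = r * sin thf + beta * cos alpha /\
      yf - wy * T = r * (1 - cos thf) + beta * sin alpha
  | RSR =>
      - alpha - gamma = 2 * IZR k * PI + thf /\
      xf - wx * T = - r * sin thf + beta * cos alpha /\
      yf - wy * T = - r * (1 - cos thf) - beta * sin alpha
  end.

Definition Qc (r wx wy xf yf thf : R) (c : path_kind * Z) (t : R) : Prop :=
  exists alpha beta gamma, 0 <= beta /\ reachk (fst c) r wx wy xf yf thf (snd c) alpha beta gamma
    /\ t = travel_time r alpha beta gamma.

Lemma Qc_unique r wx wy xf yf thf : wx^2+wy^2 < 1 ->
  forall c t1 t2, Qc r wx wy xf yf thf c t1 -> Qc r wx wy xf yf thf c t2 -> t1 = t2.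
Proof.
  intros Hw [kd k] t1 t2 [a1 [b1 [g1 [B1 [R1 ->]]]]] [a2 [b2 [g2 [B2 [R2 ->]]]]].
  unfold reachk, travel_time in *; simpl in *.
  destruct kd; destruct R1 as [S1 [X1 Y1]]; destruct R2 as [S2 [X2 Y2]].
  - assert (ES : a2 + g2 = a1 + g1) by lra.
    rewrite ES in *. set (S := a1 + g1) in *.
    assert (b1 = b2); [|subst; reflexivity].
    apply (beta_unique (xf - wx*r*S - r*sin thf) (yf - wy*r*S - r*(1-cos thf)) wx wy b1 b2); auto.
    + apply (sq_helper _ _ (cos a1) (sin a1)); [lra|lra|apply sc].
    + apply (sq_helper _ _ (cos a2) (sin a2)); [lra|lra|apply sc].
  - assert (ES : a2 + g2 = a1 + g1) by lra.
    rewrite ES in *. set (S := a1 + g1) in *.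
    assert (b1 = b2); [|subst; reflexivity].
    apply (beta_unique (xf - wx*r*S + r*sin thf) (yf - wy*r*S + r*(1-cos thf)) wx wy b1 b2); auto.
    + apply (sq_helper _ _ (cos a1) (- sin a1)); [lra|lra|rewrite <- (sc a1); ring].
    + apply (sq_helper _ _ (cos a2) (- sin a2)); [lra|lra|rewrite <- (sc a2); ring].
Qed.

Definition L : list (path_kind * Z) :=
  flat_map (fun kd => map (fun k => (kd, k)) (-4 :: -3 :: -2 :: -1 :: 0 :: 1 :: 2 :: 3 :: nil)%Z)
    (LSL :: RSR :: nil).

Lemma arc_in bound r wx wy xf yf thf : bound <= 4 * PI -> 0 <= thf < 2 * PI ->
  forall t, arc_times bound r wx wy xf yf thf t -> exists c, In c L /\ Qc r wx wy xf yf thf c t.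
Proof.
  intros Hb Hth t Ht. destruct Ht as [kd [a [b [g [Hp ->]]]]].
  destruct Hp as [Ha [Hg [Hb0 Hr]]]. unfold reaches in Hr.
  assert (exists k, reachk kd r wx wy xf yf thf k a b g) as [k Hk].
  { destruct kd; exact Hr. }
  clear Hr.
  assert (HPI := PI_RGT_0).
  assert (Hk' : (-4 <= k <= 3)%Z).
  { destruct kd; simpl in Hk; destruct Hk as [S _].
    - assert (-1 < IZR k) by nra. assert (IZR k < 4) by nra.
      apply lt_IZR in H. apply lt_IZR in H0. lia.
    - assert (-5 < IZR k) by nra. assert (IZR k < 1) by nra.
      apply lt_IZR in H. apply lt_IZR in H0. lia. }
  exists (kd, k). split.
  - assert (k = -4 \/ k = -3 \/ k = -2 \/ k = -1 \/ k = 0 \/ k = 1 \/ k = 2 \/ k = 3)%Z by lia.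
    destruct kd; simpl; intuition (subst; tauto).
  - exists a, b, g. split; [auto|split; [|reflexivity]].
    destruct kd; exact Hk.
Qed.

Theorem theorem3 (r wx wy xf yf thf : R) :
  0 < r ->
  0 < sqrt (wx ^ 2 + wy ^ 2) < 1 ->
  0 <= thf < 2 * PI ->
  (exists (kd : path_kind) (alpha beta gamma : R),
      arc_path_reaching (2 * PI) kd r wx wy xf yf thf alpha beta gamma) ->
  exists T4 T2 : R,
    is_minimum (arc_times (4 * PI) r wx wy xf yf thf) T4 /\
    is_minimum (arc_times (2 * PI) r wx wy xf yf thf) T2 /\
    T4 <= T2.
Proof.
  intros Hr Hs Hth [kd [a [b [g Hp]]]].
  assert (HPI := PI_RGT_0).
  assert (Hw : wx^2 + wy^2 < 1).
  { assert (0 <= wx^2+wy^2) by nra.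
    assert (E := sqrt_sqrt _ H). nra. }
  assert (Hsub : forall t, arc_times (2*PI) r wx wy xf yf thf t -> arc_times (4*PI) r wx wy xf yf thf t).
  { intros t [kd' [a' [b' [g' [[H1 [H2 [H3 H5]]] H4]]]]].
    exists kd', a', b', g'. split; [|exact H4].
    split; [lra|split; [lra|split; [exact H3|exact H5]]]. }
  assert (Ht : arc_times (2*PI) r wx wy xf yf thf (travel_time r a b g)).
  { exists kd, a, b, g. auto. }
  destruct (fin_min _ _ (Qc_unique r wx wy xf yf thf Hw) L (arc_times (2*PI) r wx wy xf yf thf))
    as [T2 H2].
  { apply arc_in; lra. }
  { eauto. }
  destruct (fin_min _ _ (Qc_unique r wx wy xf yf thf Hw) L (arc_times (4*PI) r wx wy xf yf thf))
    as [T4 H4].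
  { apply arc_in; lra. }
  { eauto. }
  exists T4, T2. split; [auto|split; [auto|]].
  apply (proj2 H4). apply Hsub. apply (proj1 H2).
Qed.
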